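(* Let $k$ be a field of characteristic zero and $R$ an integral domain that is a $k$-algebra, endowed with a nonzero $k$-linear derivation $\delta$. Then there is a Poisson bracket $\{-,-\}$ on the polynomial ring $R[t]$ such that (1) the Poisson centre $\{z\in\operatorname{Frac}(R[t]):\{z,-\}\equiv0\}$ of $\operatorname{Frac}(R[t])$ equals the field of constants $\{f\in\operatorname{Frac}(R):\delta(f)=0\}$ of $(\operatorname{Frac}(R),\delta)$; and (2) if $P$ is a prime differential ideal of $R$ (i.e. $\delta(P)\subseteq P$), then $PR[t]$ is a Poisson prime ideal of $R[t]$.
   Context: A Poisson bracket on a commutative $k$-algebra is a $k$-bilinear Lie bracket such that $\{-,x\}$ is a derivation for each $x$; it extends uniquely to the fraction field. A Poisson prime ideal is a prime ideal $Q$ with $\{Q,R[t]\}\subseteq Q$. $\delta$ is extended to $\operatorname{Frac}(R)$ by the quotient rule. *)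

(* Defs.v *)
From HB Require Import structures.
From mathcomp Require Import all_boot all_order all_algebra.
From mathcomp Require Import fraction.
Set Implicit Arguments. Unset Strict Implicit. Unset Printing Implicit Defensive.
Import Order.TTheory GRing.Theory Num.Theory.
Local Open Scope ring_scope.

(* A k-algebra structure on a commutative ring A is given by the structure
   map s : k -> A (a ring morphism); scalar multiplication c.x is s c * x. *)

Definition poisson_bracket (k : fieldType) (A : comNzRingType) (s : k -> A)
    (B : A -> A -> A) : Prop :=
  [/\ (forall c x y z, B (s c * x + y) z = s c * B x z + B y z),
      (forall c x y z, B x (s c * y + z) = s c * B x y + B x z),
      (forall x, B x x = 0),
      (forall x y z, B x (B y z) + B y (B z x) + B z (B x y) = 0) &
      (forall x y z, B (y * z) x = y * B z x + z * B y x)].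

Definition klin_derivation (k : fieldType) (A : comNzRingType) (s : k -> A)
    (d : A -> A) : Prop :=
  (forall c x y, d (s c * x + y) = s c * d x + d y) /\
  (forall x y, d (x * y) = x * d y + y * d x).

Definition derivation (A : comNzRingType) (d : A -> A) : Prop :=
  (forall x y, d (x + y) = d x + d y) /\
  (forall x y, d (x * y) = x * d y + y * d x).

Definition prime_ideal (A : comNzRingType) (P : A -> Prop) : Prop :=
  [/\ P 0, (forall x y, P x -> P y -> P (x + y)),
      (forall a x, P x -> P (a * x)), ~ P 1 &
      (forall x y, P (x * y) -> P x \/ P y)].

Definition ext_ideal (R : idomainType) (P : R -> Prop) (f : {poly R}) : Prop :=
  exists s : seq ({poly R} * R),
    (forall u, u \in s -> P u.2) /\ f = \sum_(u <- s) u.1 * (u.2)%:P.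

Definition poisson_prime_ideal (A : comNzRingType) (B : A -> A -> A)
    (Q : A -> Prop) : Prop :=
  prime_ideal Q /\ (forall q a, Q q -> Q (B q a)).

Notation "x %:F" := (@FracField.tofrac _ x) : ring_scope.

(* Main.v *)
Require Import Defs.
From HB Require Import structures.
From mathcomp Require Import all_boot all_order all_algebra.
From mathcomp Require Import fraction ring.
From mathcomp Require generic_quotient.
From Stdlib Require Import Classical.
Import Order.TTheory GRing.Theory Num.Theory.
Local Open Scope ring_scope.
Set Implicit Arguments. Unset Strict Implicit.

Section DerGen.
Variable A : comNzRingType.
Variable d : A -> A.
Hypothesis hd : derivation d.

Lemma der0 : d 0 = 0.
Proof.
case: hd => ha _; have H := ha 0 0; rewrite addr0 in H.
have : d 0 + d 0 - d 0 = d 0 - d 0 by rewrite -H.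
by rewrite addrK subrr.
Qed.

Lemma der1 : d 1 = 0.
Proof.
case: hd => _ hm; have H := hm 1 1; rewrite mulr1 mul1r in H.
have : d 1 + d 1 - d 1 = d 1 - d 1 by rewrite -H.
by rewrite addrK subrr.
Qed.

Lemma derD x y : d (x + y) = d x + d y. Proof. by case: hd. Qed.
Lemma derM x y : d (x * y) = x * d y + y * d x. Proof. by case: hd. Qed.

Lemma derN x : d (- x) = - d x.
Proof.
apply/eqP; rewrite -subr_eq0 opprK -derD addNr der0 //.
Qed.

Lemma derB x y : d (x - y) = d x - d y.
Proof. by rewrite derD derN. Qed.

Lemma derMn x n : d (x *+ n) = d x *+ n.
Proof. elim: n => [|n IH]; first by rewrite !mulr0n der0. by rewrite !mulrS derD IH. Qed.

Lemma der_sum (I : Type) (r : seq I) (F : I -> A) :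
  d (\sum_(i <- r) F i) = \sum_(i <- r) d (F i).
Proof. by elim: r => [|x r IH]; rewrite ?big_nil ?der0 // !big_cons derD IH. Qed.

End DerGen.


Ltac dsimp h1 h2 := repeat (rewrite (derD h1) || rewrite (derD h2) || rewrite (derB h1) || rewrite (derB h2) || rewrite (derM h1) || rewrite (derM h2) || rewrite (derN h1) || rewrite (derN h2)).

Lemma comm_der (A : comNzRingType) (D1 D2 : A -> A) :
  derivation D1 -> derivation D2 -> derivation (fun x => D1 (D2 x) - D2 (D1 x)).
Proof.
move=> h1 h2; split=> x y /=; dsimp h1 h2; ring.
Qed.

Lemma poisson_of_ders (k : fieldType) (A : comNzRingType) (s : k -> A)
  (D1 D2 : A -> A) :
  derivation D1 -> derivation D2 -> (forall x, D2 (D1 x) = D1 (D2 x)) ->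
  (forall c, D1 (s c) = 0) -> (forall c, D2 (s c) = 0) ->
  poisson_bracket s (fun x y => D1 x * D2 y - D2 x * D1 y).
Proof.
move=> h1 h2 hc s1 s2; split.
- by move=> c x y z; dsimp h1 h2; rewrite s1 s2; ring.
- by move=> c x y z; dsimp h1 h2; rewrite s1 s2; ring.
- by move=> x; rewrite mulrC subrr.
- move=> x y z /=; dsimp h1 h2; rewrite !hc. ring.
- by move=> x y z; dsimp h1 h2; ring.
Qed.


Module FQ.
Import generic_quotient.
Lemma pi_frac (A : idomainType) (r : {ratio A}) :
  (\pi_{fraction A} r)%qT = ((frac r).1)%:F / ((frac r).2)%:F.
Proof.
have hd : ((frac r).2)%:F != 0 by rewrite tofrac_eq0 denom_ratioP.
apply: (mulIf hd). rewrite divfK //.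
unlock FracField.tofrac.
rewrite -[LHS]FracField.pi_mul; apply/eqmodP.
rewrite /= FracField.equivfE /FracField.mulf /= !numden_Ratio ?mulr1 ?mulf_neq0 ?oner_neq0 ?denom_ratioP //.
by rewrite mulrC.
Qed.


Lemma fl_add (K : fieldType) (a b c e da db dc de : K) : b != 0 -> e != 0 ->
  ((a * de + e * da + (c * db + b * dc)) * (b * e) - (a * e + c * b) * (b * de + e * db)) / (b * e) ^+ 2
  = (da * b - a * db) / b ^+ 2 + (dc * e - c * de) / e ^+ 2.
Proof. by move=> hb he; field; rewrite ?hb ?he. Qed.

Lemma fl_mul (K : fieldType) (a b c e da db dc de : K) : b != 0 -> e != 0 ->
  ((a * dc + c * da) * (b * e) - (a * c) * (b * de + e * db)) / (b * e) ^+ 2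
  = a / b * ((dc * e - c * de) / e ^+ 2) + c / e * ((da * b - a * db) / b ^+ 2).
Proof. by move=> hb he; field; rewrite ?hb ?he. Qed.

Lemma fl_addq (K : fieldType) (a b c e : K) : b != 0 -> e != 0 ->
  a / b + c / e = (a * e + c * b) / (b * e).
Proof. by move=> hb he; field; rewrite ?hb ?he. Qed.

Lemma fl_mulq (K : fieldType) (a b c e : K) : b != 0 -> e != 0 ->
  a / b * (c / e) = (a * c) / (b * e).
Proof. by move=> hb he; field; rewrite ?hb ?he. Qed.

Lemma fl_cross (K : fieldType) (X Y Z W : K) : Y != 0 -> W != 0 -> X * W = Z * Y -> X / Y = Z / W.
Proof. by move=> hy hw h; apply/eqP; rewrite eqr_div // h. Qed.

Section FQ0.
Variable A : idomainType.
Definition fnum (x : {fraction A}) := (frac (repr x)).1.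
Definition fden (x : {fraction A}) := (frac (repr x)).2.

Lemma fden_neq0 x : fden x != 0. Proof. exact: denom_ratioP. Qed.
Lemma fracE x : x = (fnum x)%:F / (fden x)%:F.
Proof. by rewrite -{1}[x]reprK pi_frac. Qed.

End FQ0.
End FQ.
Import FQ.
Section FracExt1.
Variable A : idomainType.
Lemma frac_dec (x : {fraction A}) : exists n m : A, m != 0 /\ x = n%:F / m%:F.
Proof. by exists (fnum x), (fden x); split; [exact: fden_neq0 | exact: fracE]. Qed.

Lemma tofrac_inj : injective (@FracField.tofrac A).
Proof. by move=> x y /eqP; rewrite tofrac_eq => /eqP. Qed.

Variable d : A -> A.
Hypothesis hd : derivation d.

Definition fext (x : {fraction A}) :=
  ((d (fnum x))%:F * (fden x)%:F - (fnum x)%:F * (d (fden x))%:F) / ((fden x)%:F ^+ 2).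

Lemma fext_frac a b : b != 0 ->
  fext (a%:F / b%:F) = ((d a)%:F * b%:F - a%:F * (d b)%:F) / (b%:F ^+ 2).
Proof.
move=> hb; rewrite /fext.
set x := a%:F / b%:F; set n := fnum x; set m := fden x.
have hm : m != 0 by exact: fden_neq0.
have hmF : m%:F != 0 by rewrite tofrac_eq0.
have hbF : b%:F != 0 by rewrite tofrac_eq0.
have hx : n%:F / m%:F = a%:F / b%:F by rewrite -fracE.
have e1F : n%:F * b%:F = a%:F * m%:F.
  by apply/eqP; rewrite -eqr_div // hx.
have e1 : n * b = a * m by apply: tofrac_inj; rewrite !rmorphM.
have e2 : d (n * b) = d (a * m) by rewrite e1.
rewrite !(derM hd) in e2.
have key : (d n * m - n * d m) * b ^+ 2 = (d a * b - a * d b) * m ^+ 2.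
  apply/eqP; rewrite -subr_eq0; apply/eqP.
  have -> : (d n * m - n * d m) * b ^+ 2 - (d a * b - a * d b) * m ^+ 2
    = m * b * ((n * d b + b * d n) - (a * d m + m * d a))
      - (n * b - a * m) * (d m * b + d b * m) by ring.
  by rewrite e2 e1 !subrr mulr0 mul0r subrr.
apply: fl_cross; rewrite ?expf_neq0 //.
have keyF := congr1 (@FracField.tofrac A) key.
by move: keyF; rewrite !(rmorphM, rmorphB, rmorphXn).
Qed.

Lemma fext_tofrac a : fext a%:F = (d a)%:F.
Proof.
rewrite -[a%:F]divr1 -tofrac1 fext_frac ?oner_neq0 // (der1 hd) !rmorph0 tofrac1.
by rewrite mulr0 subr0 mulr1 expr1n divr1.
Qed.

Lemma fext_der : derivation fext.
Proof.
split=> x y; have [a [b [hb ->]]] := frac_dec x; have [c [e [he ->]]] := frac_dec y.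
  have hbF : b%:F != 0 by rewrite tofrac_eq0.
  have heF : e%:F != 0 by rewrite tofrac_eq0.
  have -> : a%:F / b%:F + c%:F / e%:F = (a * e + c * b)%:F / (b * e)%:F.
    by rewrite rmorphD !rmorphM fl_addq.
  rewrite !fext_frac ?mulf_neq0 // !(derD hd) !(derM hd) !rmorphD !rmorphM.
  exact: fl_add.
have hbF : b%:F != 0 by rewrite tofrac_eq0.
have heF : e%:F != 0 by rewrite tofrac_eq0.
have -> : a%:F / b%:F * (c%:F / e%:F) = (a * c)%:F / (b * e)%:F.
  by rewrite !rmorphM fl_mulq.
rewrite !fext_frac ?mulf_neq0 // !(derM hd) !rmorphD !rmorphM.
exact: fl_mul.
Qed.

Lemma der_zero_frac (D : {fraction A} -> {fraction A}) :
  derivation D -> (forall a, D a%:F = 0) -> forall x, D x = 0.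
Proof.
move=> hD h0 x; have [a [b [hb ->]]] := frac_dec x.
have hbF : b%:F != 0 by rewrite tofrac_eq0.
have e : a%:F = (a%:F / b%:F) * b%:F by rewrite divfK.
have := h0 a; rewrite {1}e (derM hD) h0 mulr0 add0r => /eqP.
by rewrite mulf_eq0 (negbTE hbF) /= => /eqP.
Qed.

End FracExt1.

Section Char0.
Variable R : idomainType.
Hypothesis hR : forall n : nat, (n%:R : R) = 0 -> n = 0%N.

Lemma mulrn_eq0' (x : R) n : x != 0 -> x *+ n = 0 -> n = 0%N.
Proof.
move=> hx /eqP; rewrite -mulr_natr mulf_eq0 (negbTE hx) /= => /eqP; exact: hR.
Qed.

Lemma mulrn_inj (x : R) n m : x != 0 -> x *+ n = x *+ m -> n = m.
Proof.
move=> hx; case: (leqP n m) => h e.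
  have : x *+ (m - n) = 0.
    by apply: (@addrI _ (x *+ n)); rewrite -mulrnDr subnKC // addr0 e.
  move/(mulrn_eq0' hx)/eqP; rewrite subn_eq0 => h2; by apply/eqP; rewrite eqn_leq h h2.
have : x *+ (n - m) = 0.
  by apply: (@addrI _ (x *+ m)); rewrite -mulrnDr (subnKC (ltnW h)) addr0 e.
move/(mulrn_eq0' hx)/eqP; rewrite subn_eq0 => h2; apply/eqP; rewrite eqn_leq h2 /=.
exact: ltnW.
Qed.

Lemma lead_coef_deriv (p : {poly R}) : lead_coef p^`() = lead_coef p *+ (size p).-1.
Proof.
have [->|p0] := eqVneq p 0; first by rewrite deriv0 lead_coef0 mul0rn.
have lt := lt_size_deriv p0.
case E: (size p) => [|[|N]].
- by move/eqP: E; rewrite size_poly_eq0 (negbTE p0).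
- rewrite mulr0n; apply/eqP; rewrite lead_coef_eq0 -size_poly_eq0.
  by rewrite E ltnS leqn0 in lt.
have hc : p^`()`_N != 0.
  rewrite coef_deriv; apply/eqP => /(mulrn_eq0' _) h.
  have : lead_coef p != 0 by rewrite lead_coef_eq0.
  by rewrite lead_coefE E /= => /h.
have hs : size p^`() = N.+1.
  apply/eqP; rewrite eqn_leq -ltnS -E lt /=.
  by rewrite ltnNge; apply/negP => /(nth_default 0); apply/eqP.
by rewrite lead_coefE hs coef_deriv lead_coefE E.
Qed.

Lemma wr_size (p q : {poly R}) : p != 0 -> q != 0 -> q * p^`() = p * q^`() ->
  size p = size q.
Proof.
move=> p0 q0 h.
have sp : (0 < size p)%N by rewrite lt0n size_poly_eq0.
have sq : (0 < size q)%N by rewrite lt0n size_poly_eq0.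
have lp : lead_coef p != 0 by rewrite lead_coef_eq0.
have lq : lead_coef q != 0 by rewrite lead_coef_eq0.
have [d0|d0] := eqVneq p^`() 0.
  have : p * q^`() = 0 by rewrite -h d0 mulr0.
  move/eqP; rewrite mulf_eq0 (negbTE p0) /= => /eqP e0.
  have := lead_coef_deriv p; rewrite d0 lead_coef0 => /esym/(mulrn_eq0' lp) hp.
  have := lead_coef_deriv q; rewrite e0 lead_coef0 => /esym/(mulrn_eq0' lq) hq.
  by rewrite -(prednK sp) -(prednK sq) hp hq.
have e0 : q^`() != 0.
  apply/eqP => e0; move: h; rewrite e0 mulr0 => /eqP; rewrite mulf_eq0 (negbTE q0) /=.
  by rewrite (negbTE d0).
have := congr1 lead_coef h; rewrite !lead_coefM !lead_coef_deriv.
rewrite !mulrnAr [lead_coef p * _]mulrC => /(mulrn_inj _) H.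
rewrite -(prednK sp) -(prednK sq) H //; exact: mulf_neq0.
Qed.

Lemma wronsk0 (p q : {poly R}) : q != 0 -> q * p^`() = p * q^`() ->
  lead_coef q *: p = lead_coef p *: q.
Proof.
move=> q0 h.
have [->|p0] := eqVneq p 0; first by rewrite lead_coef0 scale0r scaler0.
set r := lead_coef q *: p - lead_coef p *: q.
have hr : q * r^`() = r * q^`().
  rewrite /r derivB !derivZ mulrBr mulrBl -!scalerAr -!scalerAl h.
  by rewrite [q * q^`()]mulrC.
have sz := wr_size p0 q0 h.
suff : r = 0 by move/eqP; rewrite subr_eq0 => /eqP.
apply/eqP; apply: contraT => r0.
have szr := wr_size r0 q0 hr.
have : r`_(size q).-1 = 0.
  rewrite /r coefB !coefZ -sz -!lead_coefE sz -lead_coefE mulrC subrr //.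
by rewrite -szr -lead_coefE => /eqP; rewrite lead_coef_eq0 (negbTE r0).
Qed.

End Char0.

Section PolyD.
Variable R : idomainType.
Variable delta : R -> R.
Hypothesis hd : derivation delta.

Definition pD (p : {poly R}) : {poly R} := \poly_(i < size p) delta p`_i.

Lemma coef_pD p i : (pD p)`_i = delta p`_i.
Proof.
rewrite coef_poly; case: ltnP => // h.
by rewrite nth_default // (der0 hd).
Qed.

Lemma pD_der : derivation pD.
Proof.
split=> x y; apply/polyP => i.
  by rewrite coefD !coef_pD coefD (derD hd).
rewrite coefD coef_pD coefM (der_sum hd) coefM coefMr -big_split /=.
by apply: eq_bigr => j _; rewrite (derM hd) !coef_pD.
Qed.

Lemma deriv_der : derivation (@deriv R).
Proof.
split=> x y; first exact: derivD.
by rewrite derivM addrC [x^`() * y]mulrC.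
Qed.

Lemma pD_deriv p : pD p^`() = (pD p)^`().
Proof.
by apply/polyP => i; rewrite coef_pD !coef_deriv coef_pD (derMn hd).
Qed.

Lemma pD_C c : pD c%:P = (delta c)%:P.
Proof.
by apply/polyP => i; rewrite coef_pD !coefC; case: (i == 0)%N => //; rewrite (der0 hd).
Qed.

Lemma pD_X : pD 'X = 0.
Proof.
apply/polyP => i; rewrite coef_pD coefX coef0.
by case: (i == 1)%N; rewrite ?(der1 hd) ?(der0 hd).
Qed.

Definition Bp (p q : {poly R}) := p^`() * pD q - pD p * q^`().

End PolyD.

Section Ideal.
Variable R : idomainType.
Variable P : R -> Prop.
Hypothesis hP : prime_ideal P.

Lemma P0 : P 0. Proof. by case: hP. Qed.
Lemma PD x y : P x -> P y -> P (x + y). Proof. by case: hP => _ h _ _ _; apply: h. Qed.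
Lemma PM a x : P x -> P (a * x). Proof. by case: hP => _ _ h _ _; apply: h. Qed.
Lemma PMr a x : P x -> P (x * a). Proof. by rewrite mulrC; apply: PM. Qed.
Lemma PN x : P x -> P (- x). Proof. by move=> h; rewrite -mulN1r; apply: PM. Qed.
Lemma PB x y : P x -> P y -> P (x - y). Proof. by move=> h1 h2; apply: PD => //; apply: PN. Qed.
Lemma PMn x n : P x -> P (x *+ n). Proof. by move=> h; rewrite -mulr_natl; apply: PM. Qed.
Lemma Pbig (I : Type) (r : seq I) (Pr : pred I) (F : I -> R) :
  (forall i, Pr i -> P (F i)) -> P (\sum_(i <- r | Pr i) F i).
Proof. move=> h; apply: big_ind => //; [exact: P0 | exact: PD]. Qed.

Definition Qc (f : {poly R}) := forall i, P f`_i.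

Lemma ext_idealE f : ext_ideal P f <-> Qc f.
Proof.
split.
  case=> s [hs ->] i; rewrite coef_sum.
  elim: s hs => [|u s IH] hs; first by rewrite big_nil; exact: P0.
  rewrite big_cons; apply: PD; last by apply: IH => v hv; apply: hs; rewrite in_cons hv orbT.
  by rewrite coefMC; apply: PM; apply: hs; rewrite mem_head.
move=> h; exists [seq ('X^i, f`_i) | i <- iota 0 (size f)]; split.
  by move=> u /mapP [i _ ->] /=.
rewrite big_map.
have -> : iota 0 (size f) = index_iota 0 (size f) by rewrite /index_iota subn0.
rewrite big_mkord /=.
rewrite -[LHS]coefK poly_def; apply: eq_bigr => i _.
by rewrite mulrC mul_polyC.
Qed.

Lemma QcM a x : Qc x -> Qc (a * x).
Proof. by move=> h i; rewrite coefM; apply: Pbig => j _; apply: PM. Qed.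
Lemma QcMr a x : Qc x -> Qc (x * a).
Proof. by rewrite mulrC; apply: QcM. Qed.
Lemma QcB x y : Qc x -> Qc y -> Qc (x - y).
Proof. by move=> h1 h2 i; rewrite coefB; apply: PB. Qed.

Lemma min_bad (g : nat -> R) : ~ (forall i, P (g i)) ->
  exists i, ~ P (g i) /\ forall l, (l < i)%N -> P (g l).
Proof.
move=> H; apply: NNPP => H2; apply: H => i.
suff : forall n l, (l < n)%N -> P (g l) by move/(_ i.+1 i); apply.
elim=> [|n IH] l //; rewrite ltnS leq_eqVlt; case/orP => [/eqP ->|]; last exact: IH.
apply: NNPP => hn; apply: H2; exists n; split => //.
Qed.

Lemma Qc_prime x y : Qc (x * y) -> Qc x \/ Qc y.
Proof.
move=> h; case: (classic (Qc x)) => hx; first by left.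
case: (classic (Qc y)) => hy; first by right.
have [i [ni mi]] := min_bad hx.
have [j [nj mj]] := min_bad hy.
exfalso.
have hi : (i < (i + j).+1)%N by rewrite ltnS leq_addr.
have := h (i + j); rewrite coefM (bigD1 (Ordinal hi)) //= addKn => hs.
set S := \sum_(_ < _ | _) _ in hs.
have PS : P S.
  apply: Pbig => l /= hl.
  case: (ltnP l i) => li; first by apply: PMr; apply: mi.
  apply: PM; apply: mj.
  have lt : (i < l)%N by rewrite ltn_neqAle li andbT eq_sym; move: hl; apply: contra => /eqP e; apply/eqP/val_inj.
  have ll := ltn_ord l; rewrite ltnS in ll.
  rewrite (_ : ((i + j)%R - l = (i + j)%N - l)%N) // ltn_subLR // ltn_add2r //.
have : P (x`_i * y`_j) by have := PB hs PS; rewrite addrK.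
by case: hP => _ _ _ _ /(_ _ _ _) hpr => /hpr [].
Qed.

Lemma Qc_prime_ideal : prime_ideal Qc.
Proof.
split.
- by move=> i; rewrite coef0; exact: P0.
- by move=> x y h1 h2 i; rewrite coefD; apply: PD.
- by move=> a x h; apply: QcM.
- by move=> /(_ 0%N); rewrite coef1 /=; case: hP.
- exact: Qc_prime.
Qed.

Variable delta : R -> R.
Hypothesis hd : derivation delta.
Hypothesis hPd : forall x, P x -> P (delta x).

Lemma ext_poisson : poisson_prime_ideal (@Bp R delta) (ext_ideal P).
Proof.
split.
  have [a b c d e] := Qc_prime_ideal; split.
  - by apply/ext_idealE.
  - by move=> x y /ext_idealE h1 /ext_idealE h2; apply/ext_idealE; apply: b.
  - by move=> x y /ext_idealE h1; apply/ext_idealE; apply: c.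
  - by move/ext_idealE.
  - by move=> x y /ext_idealE /e [] h; [left|right]; apply/ext_idealE.
move=> f g /ext_idealE h; apply/ext_idealE; rewrite /Bp.
apply: QcB; first apply: QcMr.
  by move=> i; rewrite coef_deriv; apply: PMn.
by apply: QcMr => i; rewrite coef_pD //; apply: hPd.
Qed.

End Ideal.

Section PB.
Variables (k : fieldType) (A : comNzRingType) (s : k -> A) (B : A -> A -> A).
Hypothesis hs1 : s 1 = 1.
Hypothesis hB : poisson_bracket s B.

Lemma BaddL x y z : B (x + y) z = B x z + B y z.
Proof. by case: hB => h _ _ _ _; have := h 1 x y z; rewrite hs1 !mul1r. Qed.
Lemma BaddR x y z : B x (y + z) = B x y + B x z.
Proof. by case: hB => _ h _ _ _; have := h 1 x y z; rewrite hs1 !mul1r. Qed.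
Lemma Balt x : B x x = 0. Proof. by case: hB => _ _ h _ _; apply: h. Qed.
Lemma BderL x y z : B (y * z) x = y * B z x + z * B y x.
Proof. by case: hB => _ _ _ _ h; apply: h. Qed.
Lemma Banti x y : B x y = - B y x.
Proof.
have := Balt (x + y); rewrite BaddL !BaddR !Balt add0r addr0 => /eqP.
by rewrite addr_eq0 => /eqP.
Qed.
Lemma BderR x y z : B x (y * z) = y * B x z + z * B x y.
Proof.
by rewrite Banti BderL (Banti z x) (Banti y x) !mulrN -opprD opprK.
Qed.
End PB.

Lemma fl_quot (K : fieldType) (D : K -> K) : derivation D -> forall a b, b != 0 ->
  D (a / b) = (D a * b - a * D b) / b ^+ 2.
Proof.
move=> hD a b hb.
have e : a = (a / b) * b by rewrite divfK.
have := derM hD (a / b) b; rewrite -e => h.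
by rewrite h; field.
Qed.

Lemma gl1 (K : fieldType) (z b a X Ua Ub : K) : b != 0 -> z * b = a ->
  Ua = z * Ub + b * X -> b * Ua = a * Ub -> X = 0.
Proof.
move=> hb e1 e2 e3.
have : b * b * X = 0.
  have -> : b * b * X = b * (z * Ub + b * X) - (z * b) * Ub by ring.
  by rewrite -e2 e3 e1 subrr.
by move/eqP; rewrite !mulf_eq0 (negbTE hb) /= => /eqP.
Qed.

Section BpFacts.
Variable R : idomainType.
Variable delta : R -> R.
Hypothesis hd : derivation delta.

Lemma Bp_C p c : Bp delta p c%:P = p^`() * (delta c)%:P.
Proof. by rewrite /Bp (pD_C hd) derivC mulr0 subr0. Qed.
Lemma Bp_Cl c u : Bp delta c%:P u = - ((delta c)%:P * u^`()).
Proof. by rewrite /Bp (pD_C hd) derivC mul0r sub0r. Qed.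
Lemma Bp_CX c : Bp delta c%:P 'X = - (delta c)%:P.
Proof. by rewrite Bp_Cl derivX mulr1. Qed.
End BpFacts.

Theorem proposition5p2 (k : fieldType) (R : idomainType)
    (iota : {rmorphism k -> R}) (delta : R -> R) :
  [pchar k] =i pred0 ->
  klin_derivation iota delta ->
  (exists x, delta x != 0) ->
  exists B : {poly R} -> {poly R} -> {poly R},
    [/\ poisson_bracket (fun c => (iota c)%:P) B,
        (* the bracket extends to Frac(R[t]) *)
        (exists B' : {fraction {poly R}} -> {fraction {poly R}} -> {fraction {poly R}},
           poisson_bracket (fun c => ((iota c)%:P)%:F) B' /\
           forall f g, B' f%:F g%:F = (B f g)%:F),
        (* (1) Poisson centre of Frac(R[t]) = constants of (Frac(R), delta),
           Frac(R) being embedded by a/b |-> a/b *)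
        (forall (B' : {fraction {poly R}} -> {fraction {poly R}} -> {fraction {poly R}})
                (delta' : {fraction R} -> {fraction R}),
           poisson_bracket (fun c => ((iota c)%:P)%:F) B' ->
           (forall f g, B' f%:F g%:F = (B f g)%:F) ->
           derivation delta' ->
           (forall a, delta' a%:F = (delta a)%:F) ->
           forall z : {fraction {poly R}},
             (forall w, B' z w = 0) <->
             (exists a b : R, [/\ b != 0, delta' (a%:F / b%:F) = 0 &
                                  z = (a%:P)%:F / (b%:P)%:F])) &
        (* (2) prime differential ideals extend to Poisson prime ideals *)
        (forall P : R -> Prop, prime_ideal P -> (forall x, P x -> P (delta x)) ->
           poisson_prime_ideal B (ext_ideal P))].
Proof.
move=> hchar [hkl hkm] [a0 ha0].
have hd : derivation delta.
  split=> // x y; have := hkl 1 x y; by rewrite rmorph1 !mul1r.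
have hdk : forall c, delta (iota c) = 0.
  move=> c; have := hkl c 1 0; rewrite mulr1 addr0 (der1 hd) (der0 hd) mulr0 addr0.
  done.
have hR : forall n : nat, (n%:R : R) = 0 -> n = 0%N.
  move=> n; rewrite -(rmorph_nat iota) => /eqP; rewrite fmorph_eq0.
  by rewrite (pcharf0P k).1 // => /eqP.
set D2 := pD delta.
have hD2 : derivation D2 by exact: pD_der.
have hD1 : derivation (@deriv R) by exact: deriv_der.
exists (Bp delta); split.
- apply: (poisson_of_ders hD1 hD2).
  + by move=> x; rewrite /D2 (pD_deriv hd).
  + by move=> c; rewrite derivC.
  + by move=> c; rewrite /D2 (pD_C hd) hdk.
- exists (fun x y => fext deriv x * fext D2 y - fext D2 x * fext deriv y); split.
    apply: (poisson_of_ders (fext_der hD1) (fext_der hD2)).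
    + move=> x; apply/eqP; rewrite eq_sym -subr_eq0; apply/eqP.
      apply: (der_zero_frac (comm_der (fext_der hD1) (fext_der hD2))) => a /=.
      by rewrite !fext_tofrac // /D2 (pD_deriv hd) subrr.
    + by move=> c; rewrite fext_tofrac // derivC rmorph0.
    + by move=> c; rewrite fext_tofrac // /D2 (pD_C hd) hdk rmorph0.
  by move=> f g; rewrite !fext_tofrac // -!rmorphM -rmorphB.
- move=> B' dl hB' hext hdl hdle z.
  have hs1 : (fun c : k => ((iota c)%:P)%:F) 1 = 1 :> {fraction {poly R}}.
    by rewrite /= rmorph1 polyC1 rmorph1.
  split.
  + move=> hz.
    have [p [q [q0 ez]]] := frac_dec z.
    have qF0 : q%:F != 0 by rewrite tofrac_eq0.
    have ezq : z * q%:F = p%:F by rewrite ez divfK.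
    have step : forall w, B' p%:F w = z * B' q%:F w.
      by move=> w; rewrite -ezq (BderL hB') hz mulr0 addr0.
    have e1 := step (a0%:P)%:F; rewrite !hext !(Bp_C hd) in e1.
    have e2 : (q * (p^`() * (delta a0)%:P))%:F = (p * (q^`() * (delta a0)%:P))%:F.
      by rewrite tofracM e1 mulrA [_ * z]mulrC ezq -tofracM.
    move/tofrac_inj in e2.
    have e3 : q * p^`() = p * q^`().
      have hc : (delta a0)%:P != 0 by rewrite polyC_eq0.
      by apply: (mulIf hc); rewrite -!mulrA.
    have w := wronsk0 hR q0 e3.
    set a := lead_coef p in w *; set b := lead_coef q in w *.
    have b0 : b != 0 by rewrite lead_coef_eq0.
    have ez2 : z = (a%:P)%:F / (b%:P)%:F.
      rewrite ez; apply: fl_cross; rewrite ?tofrac_eq0 ?polyC_eq0 //.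
      by rewrite -!tofracM mulrC !mul_polyC w.
    exists a, b; split => //.
    have bP0 : (b%:P)%:F != 0 :> {fraction {poly R}} by rewrite tofrac_eq0 polyC_eq0.
    have zb : z * (b%:P)%:F = (a%:P)%:F by rewrite ez2 (divfK bP0).
    have e5 : B' (a%:P)%:F 'X%:F = z * B' (b%:P)%:F 'X%:F.
      by rewrite -zb (BderL hB') hz mulr0 addr0.
    rewrite !hext !(Bp_CX hd) in e5.
    have e6 : b * delta a = a * delta b.
      have : (b%:P * - (delta a)%:P)%:F = (a%:P * - (delta b)%:P)%:F.
        by rewrite tofracM e5 mulrA [_ * z]mulrC zb -tofracM.
      by move/tofrac_inj; rewrite !mulrN -!polyCM => /oppr_inj /polyC_inj.
    rewrite (fl_quot hdl) ?tofrac_eq0 // !hdle -!tofracM -tofracB.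
    by rewrite [delta a * b]mulrC e6 subrr tofrac0 mul0r.
  + case=> a [b [b0 hq ->]].
    rewrite (fl_quot hdl) ?tofrac_eq0 // !hdle in hq.
    move/eqP: hq; rewrite mulf_eq0 invr_eq0 expf_eq0 tofrac_eq0 (negbTE b0) andbF orbF.
    rewrite subr_eq0 -!tofracM tofrac_eq => /eqP e6.
    set zz := _ / _.
    have bP0 : (b%:P)%:F != 0 :> {fraction {poly R}} by rewrite tofrac_eq0 polyC_eq0.
    have zb : zz * (b%:P)%:F = (a%:P)%:F by rewrite /zz divfK.
    have hu : forall u, B' zz u%:F = 0.
      move=> u.
      apply: (@gl1 _ zz (b%:P)%:F (a%:P)%:F _ (B' (a%:P)%:F u%:F) (B' (b%:P)%:F u%:F)) => //.
        by rewrite -zb (BderL hB').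
      rewrite !hext -!tofracM !(Bp_Cl hd) !mulrN !mulrA -!polyCM [b * _]mulrC e6.
      by rewrite mulrC.
    move=> w; have [u [v [v0 ->]]] := frac_dec w.
    have vF : v%:F != 0 by rewrite tofrac_eq0.
    have := hu u; rewrite -{1}[u%:F](divfK vF) (@BderR _ _ _ _ hs1 hB') hu mulr0 add0r.
    by move/eqP; rewrite mulf_eq0 (negbTE vF) /= => /eqP.
- move=> P hP hPd; exact: ext_poisson.
Qed.
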